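(* Let $K$ be the field of fractions of a complete discrete valuation ring $\mathcal{O}$ with maximal ideal $\mathfrak{p}$ such that the residue field $\mathcal{O}/\mathfrak{p}$ is finite. In the coefficient-choosing game of degree $d = 3$ over $K$, whichever player makes the last move has a winning strategy.
   Context: The coefficient-choosing game of degree $d$ over $K$: Nora and Wanda alternately choose coefficients of $f(x) = a_d x^d + \cdots + a_0$; on each move the current player picks a not-yet-chosen coefficient and assigns it a value in $K$, subject to $a_d \neq 0$, $a_0 \neq 0$. After all $d+1$ coefficients are chosen, Wanda wins if $f$ has a root in $K$, and Nora wins otherwise. Who moves first is fixed in advance. *)

(* Defs.v *)
From HB Require Import structures.
From mathcomp Require Import all_boot all_order all_algebra.
Set Implicit Arguments. Unset Strict Implicit. Unset Printing Implicit Defensive.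
Import Order.TTheory GRing.Theory Num.Theory.
Local Open Scope ring_scope.

(* v is a normalized discrete valuation on K; v 0 is irrelevant.
   [vge v x n] means "v(x) >= n" with the convention v(0) = +oo. *)
Definition vge (K : fieldType) (v : K -> int) (x : K) (n : int) : Prop :=
  x = 0 \/ n <= v x.

(* K together with v is the fraction field of a complete DVR
   O = {x | v x >= 0} whose residue field O/p (p = {x | v x >= 1}) is finite. *)
Record complete_dvf_finite_residue (K : fieldType) (v : K -> int) : Prop := {
  val_mul : forall x y : K, x != 0 -> y != 0 -> v (x * y) = v x + v y;
  val_add : forall x y : K, x != 0 -> y != 0 -> x + y != 0 ->
              Order.min (v x) (v y) <= v (x + y);
  val_unif : exists pi : K, pi != 0 /\ v pi = 1;
  val_complete : forall u : nat -> K,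
    (forall n : int, exists N : nat, forall m k : nat,
        (N <= m)%N -> (N <= k)%N -> vge v (u m - u k) n) ->
    exists l : K, forall n : int, exists N : nat, forall m : nat,
        (N <= m)%N -> vge v (u m - l) n;
  residue_finite : exists s : seq K,
    (forall y, y \in s -> vge v y 0) /\
    forall x : K, vge v x 0 -> exists2 y, y \in s & vge v (x - y) 1
}.

(* A position: coefficient a_i is [Some c] if already chosen, [None] otherwise. *)
Definition position (K : fieldType) (d : nat) := {ffun 'I_d.+1 -> option K}.

Definition empty_position (K : fieldType) (d : nat) : position K d :=
  [ffun _ => None].

Definition set_coef (K : fieldType) (d : nat) (s : position K d) (i : 'I_d.+1)
  (c : K) : position K d :=
  [ffun j => if j == i then Some c else s j].

Definition legal (K : fieldType) (d : nat) (i : 'I_d.+1) (c : K) : Prop :=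
  ((i : nat) = 0%N \/ (i : nat) = d) -> c != 0.

Definition poly_of (K : fieldType) (d : nat) (s : position K d) : {poly K} :=
  \poly_(i < d.+1) odflt 0 (s (inord i)).

(* [wanda_wins d wmove n s]: from position s, with n moves remaining and
   [wmove] = "Wanda is to move", Wanda has a winning strategy. *)
Fixpoint wanda_wins (K : fieldType) (d : nat) (wmove : bool) (n : nat)
  (s : position K d) : Prop :=
  match n with
  | 0 => exists x : K, root (poly_of s) x
  | n'.+1 =>
    if wmove then
      exists (i : 'I_d.+1) (c : K),
        s i = None /\ legal i c /\ wanda_wins (~~ wmove) n' (set_coef s i c)
    else
      forall (i : 'I_d.+1) (c : K),
        s i = None -> legal i c -> wanda_wins (~~ wmove) n' (set_coef s i c)
  end.

Fixpoint nora_wins (K : fieldType) (d : nat) (wmove : bool) (n : nat)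
  (s : position K d) : Prop :=
  match n with
  | 0 => ~ (exists x : K, root (poly_of s) x)
  | n'.+1 =>
    if wmove then
      forall (i : 'I_d.+1) (c : K),
        s i = None -> legal i c -> nora_wins (~~ wmove) n' (set_coef s i c)
    else
      exists (i : 'I_d.+1) (c : K),
        s i = None /\ legal i c /\ nora_wins (~~ wmove) n' (set_coef s i c)
  end.

Definition wanda_has_winning_strategy (K : fieldType) (d : nat)
  (wanda_first : bool) : Prop :=
  wanda_wins wanda_first d.+1 (empty_position K d).

Definition nora_has_winning_strategy (K : fieldType) (d : nat)
  (wanda_first : bool) : Prop :=
  nora_wins wanda_first d.+1 (empty_position K d).

(* Main.v *)
Require Import Defs.
From HB Require Import structures.
From mathcomp Require Import all_boot all_order all_algebra.
From mathcomp Require Import zify ring.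
Set Implicit Arguments. Unset Strict Implicit. Unset Printing Implicit Defensive.
Import Order.TTheory GRing.Theory Num.Theory.
Local Open Scope ring_scope.


Lemma v_one (K : fieldType) (v : K -> int) (H : complete_dvf_finite_residue v) : v 1 = 0.
Proof. have e : v (1 * 1) = v 1 + v 1 := val_mul H (oner_neq0 K) (oner_neq0 K).
rewrite mulr1 in e. lia. Qed.

Lemma v_m1 (K : fieldType) (v : K -> int) (H : complete_dvf_finite_residue v) : v (-1) = 0.
Proof.
have n1 : (-1 : K) != 0 by rewrite oppr_eq0 oner_neq0.
have e : v (-1 * -1) = v (-1) + v (-1) := val_mul H n1 n1.
rewrite mulrNN mulr1 (v_one H) in e. lia. Qed.

Lemma v_opp (K : fieldType) (v : K -> int) (H : complete_dvf_finite_residue v) x :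
  x != 0 -> v (- x) = v x.
Proof.
move=> x0; have n1 : (-1 : K) != 0 by rewrite oppr_eq0 oner_neq0.
rewrite -mulN1r (val_mul H n1 x0) (v_m1 H); lia. Qed.

Lemma v_inv (K : fieldType) (v : K -> int) (H : complete_dvf_finite_residue v) x :
  x != 0 -> v (x^-1) = - v x.
Proof.
move=> x0; have xi : x^-1 != 0 by rewrite invr_eq0.
have e : v (x * x^-1) = v x + v x^-1 := val_mul H x0 xi.
rewrite mulfV // (v_one H) in e; lia. Qed.

Lemma v_exp (K : fieldType) (v : K -> int) (H : complete_dvf_finite_residue v) x n :
  x != 0 -> v (x ^+ n) = v x * n%:Z.
Proof.
move=> x0; elim: n => [|n IH]; first by rewrite expr0 (v_one H); lia.
rewrite exprS (val_mul H x0) ?expf_neq0 // IH; lia. Qed.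

Lemma exists_val (K : fieldType) (v : K -> int) (H : complete_dvf_finite_residue v) (n : int) :
  exists e : K, e != 0 /\ v e = n.
Proof.
have [pi [pi0 vpi]] := val_unif H.
case: n => k.
  exists (pi ^+ k); split; first by rewrite expf_neq0.
  by rewrite (v_exp H) // vpi; lia.
exists (pi ^+ k.+1)^-1; split; first by rewrite invr_eq0 expf_neq0.
rewrite (v_inv H) ?expf_neq0 // (v_exp H) // vpi; lia.
Qed.

Lemma vge0 (K : fieldType) (v : K -> int) n : vge v 0 n.
Proof. by left. Qed.

Lemma vge_self (K : fieldType) (v : K -> int) x : vge v x (v x).
Proof. by right. Qed.

Lemma vge_le (K : fieldType) (v : K -> int) x n m : vge v x n -> m <= n -> vge v x m.
Proof. by case=> [->|h] hm; [left|right; apply: le_trans hm h]. Qed.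

Lemma vge_add (K : fieldType) (v : K -> int) (H : complete_dvf_finite_residue v) x y n :
  vge v x n -> vge v y n -> vge v (x + y) n.
Proof.
case=> [->|hx]; first by rewrite add0r.
case=> [->|hy]; first by rewrite addr0; right.
have [x0|x0] := eqVneq x 0; first by rewrite x0 add0r; right.
have [y0|y0] := eqVneq y 0; first by rewrite y0 addr0; right.
have [s0|s0] := eqVneq (x + y) 0; first by left.
right; apply: le_trans (val_add H x0 y0 s0).
by rewrite le_min hx hy.
Qed.

Lemma vge_opp (K : fieldType) (v : K -> int) (H : complete_dvf_finite_residue v) x n :
  vge v x n -> vge v (- x) n.
Proof.
case=> [->|hx]; first by rewrite oppr0; left.
have [x0|x0] := eqVneq x 0; first by rewrite x0 oppr0; left.
by right; rewrite (v_opp H).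
Qed.

Lemma vge_sub (K : fieldType) (v : K -> int) (H : complete_dvf_finite_residue v) x y n :
  vge v x n -> vge v y n -> vge v (x - y) n.
Proof. by move=> hx hy; apply: vge_add => //; apply: vge_opp. Qed.

Lemma vge_mul (K : fieldType) (v : K -> int) (H : complete_dvf_finite_residue v) x y n m :
  vge v x n -> vge v y m -> vge v (x * y) (n + m).
Proof.
case=> [->|hx]; first by rewrite mul0r; left.
case=> [->|hy]; first by rewrite mulr0; left.
have [x0|x0] := eqVneq x 0; first by rewrite x0 mul0r; left.
have [y0|y0] := eqVneq y 0; first by rewrite y0 mulr0; left.
by right; rewrite (val_mul H x0 y0) lerD.
Qed.

Lemma dom_neq0 (K : fieldType) (v : K -> int) (H : complete_dvf_finite_residue v) x y :
  x != 0 -> vge v y (v x + 1) -> x + y != 0.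
Proof.
move=> x0 hy; apply/eqP => s0.
have : y = - x by apply/eqP; rewrite -subr_eq0 opprK addrC s0.
move=> ey; move: hy; rewrite ey => -[]; first by apply/eqP; rewrite oppr_eq0.
rewrite (v_opp H) //; lia.
Qed.

Definition cong (K : fieldType) (v : K -> int) (x y : K) : bool :=
  (x - y == 0) || (1 <= v (x - y)).

Lemma congE (K : fieldType) (v : K -> int) x y : cong v x y <-> vge v (x - y) 1.
Proof.
split; first by case/orP => [/eqP h|h]; [left|right].
by rewrite /cong; case=> [->|h]; apply/orP; [left|right].
Qed.

Lemma cong_sym (K : fieldType) (v : K -> int) (H : complete_dvf_finite_residue v) x y :
  cong v x y -> cong v y x.
Proof. by move/congE=> h; apply/congE; rewrite -opprB; apply: vge_opp. Qed.

Lemma cong_trans (K : fieldType) (v : K -> int) (H : complete_dvf_finite_residue v) x y z :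
  cong v x y -> cong v y z -> cong v x z.
Proof.
move/congE=> h1 /congE h2; apply/congE.
have -> : x - z = (x - y) + (y - z) by ring.
exact: vge_add.
Qed.

Definition canon (K : fieldType) (v : K -> int) (R : seq K) (x : K) : K :=
  nth 0 R (find (cong v x) R).

Lemma residue_choice (K : fieldType) (v : K -> int) (H : complete_dvf_finite_residue v) (w : K) :
  w != 0 -> v w = 0 ->
  exists u, vge v u 0 /\ forall y, y != 0 -> v y = 0 -> ~ vge v (w * y ^+ 3 + u * y + 1) 1.
Proof.
move=> w0 vw.
have [R [hR hcov]] := residue_finite H.
have has_c x : vge v x 0 -> has (cong v x) R.
  move=> /hcov [y yR hy]; apply/hasP; exists y => //; exact/congE.
have canon_in x : vge v x 0 -> canon v R x \in R.
  by move=> hx; rewrite /canon mem_nth // -has_find has_c.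
have canon_c x : vge v x 0 -> cong v x (canon v R x).
  by move=> hx; rewrite /canon nth_find // has_c.
have canon_eq x x' : cong v x x' -> canon v R x = canon v R x'.
  move=> hxx'; rewrite /canon; congr nth; apply: eq_find => r.
  apply/idP/idP => h.
    exact: (cong_trans H (cong_sym H hxx') h).
  exact: (cong_trans H hxx' h).
set C := undup (map (canon v R) R).
have C_O c : c \in C -> vge v c 0.
  by rewrite mem_undup => /mapP [r rR ->]; apply: (hR _); apply: (canon_in); apply: (hR _).
have C_fix c : c \in C -> canon v R c = c.
  rewrite mem_undup => /mapP [r rR ->]; apply: (canon_eq).
  exact: (cong_sym H (canon_c r (hR r rR))).
have in_C x : vge v x 0 -> canon v R x \in C.
  move=> hx; rewrite mem_undup; apply/mapP; exists (canon v R x); first exact: canon_in.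
  apply: (canon_eq); exact: (canon_c).
set nz := fun c => ~~ cong v c 0.
set C' := filter nz C.
set bad := fun c => canon v R (- (w * c ^+ 3 + 1) / c).
have : ~~ all (fun c => c \in map bad C') C.
  apply/negP => /allP hall.
  have h1 : (size C <= size (map bad C'))%N by apply: uniq_leq_size; [apply: undup_uniq|].
  rewrite size_map size_filter in h1.
  have h2 : has (predC nz) C.
    apply/hasP; exists (canon v R 0); first by apply: (in_C); left.
    by rewrite /= /nz negbK; apply: (cong_sym H); apply: (canon_c); left.
  rewrite has_count in h2.
  have h3 := count_predC nz C.
  move: h1; rewrite -h3 -{2}[count nz C]addn0 leq_add2l leqn0 => /eqP e; by rewrite e in h2.
case/allPn => u uC ubad.
exists u; split; first exact: C_O.
move=> y y0 vy hE.
have yO : vge v y 0 by right; rewrite vy.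
set c := canon v R y.
have cC : c \in C by apply: (in_C).
have cy : cong v y c by apply: (canon_c).
have cnz : nz c.
  apply/negP => hc0.
  have : cong v y 0 by exact: (cong_trans H cy hc0).
  by move/congE; rewrite subr0 => -[/eqP|]; [rewrite (negPf y0)|rewrite vy].
have c0 : c != 0.
  by apply/negP => /eqP e; move: cnz; rewrite /nz e /cong subrr eqxx.
have vc : v c = 0.
  have := C_O c cC; case; first by move/eqP; rewrite (negPf c0).
  move=> h; apply/eqP; rewrite eq_le h andbT; apply/negP => h'.
  move: cnz; rewrite /nz /cong subr0 negb_or => /andP [_ /negP]; apply.
  lia.
have key : cong v u (- (w * c ^+ 3 + 1) / c).
  apply/congE.
  have -> : u - - (w * c ^+ 3 + 1) / c =
     (w * y ^+ 3 + u * y + 1) * y^-1 - w * (y - c) * (y + c) + (y - c) * (y^-1 * c^-1).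
    by field; rewrite c0 y0.
  have yi : vge v y^-1 0 by right; rewrite (v_inv H) // vy.
  have ci : vge v c^-1 0 by right; rewrite (v_inv H) // vc.
  have cO : vge v c 0 by right; rewrite vc.
  have yc : vge v (y - c) 1 by apply/congE.
  apply: (vge_add H); first apply: (vge_add H).
  - by apply: (vge_le (vge_mul H hE yi)).
  - rewrite -!mulNr. apply: (vge_le (vge_mul H (vge_mul H (vge_opp H (vge_self v w)) yc) (vge_add H yO cO))).
    by rewrite vw.
  - by apply: (vge_le (vge_mul H yc (vge_mul H yi ci))).
have : u = bad c.
  by rewrite -(C_fix u uC) /bad; apply: (canon_eq).
move=> ub; move: ubad; rewrite ub map_f //.
by rewrite mem_filter cnz cC.
Qed.

Lemma v_mon (K : fieldType) (v : K -> int) (H : complete_dvf_finite_residue v) (a x : K) n :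
  a != 0 -> x != 0 -> v (a * x ^+ n) = v a + v x * n%:Z.
Proof. by move=> a0 x0; rewrite (val_mul H a0) ?expf_neq0 // (v_exp H). Qed.

Lemma lemB (K : fieldType) (v : K -> int) (H : complete_dvf_finite_residue v) (A D : K) :
  A != 0 -> D != 0 -> exists b, forall x, A * x ^+ 3 + b * x + D != 0.
Proof.
move=> A0 D0.
have [s hs] : exists s : int, v D - v A = 3 * s \/ v D - v A = 3 * s + 1 \/ v D - v A = 3 * s + 2.
  by exists ((v D - v A) %/ 3)%Z; lia.
have [e [e0 ve]] := exists_val H s.
have A3 x : x != 0 -> A * x ^+ 3 != 0 by move=> x0; rewrite mulf_neq0 ?expf_neq0.
case: hs => [hs|hs]; last first.
  exists 0 => x; rewrite mul0r addr0.
  have [->|x0] := eqVneq x 0; first by rewrite expr0n mulr0 add0r.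
  have vx := v_mon H 3 A0 x0.
  have [lt|ge] := ltP (v A + v x * 3%:Z) (v D).
    apply: (dom_neq0 H (A3 x x0)); right; rewrite vx; lia.
  rewrite addrC; apply: (dom_neq0 H D0); right; rewrite vx; lia.
set w := A * e ^+ 3 / D.
have w0 : w != 0 by rewrite /w mulf_neq0 ?invr_eq0 ?A3.
have vw : v w = 0.
  by rewrite /w (val_mul H (A3 e e0)) ?invr_eq0 // (v_mon H) // (v_inv H) // ve; lia.
have [u [uO hu]] := residue_choice H w0 vw.
exists (u * D / e) => x.
have [->|x0] := eqVneq x 0; first by rewrite expr0n mulr0 mulr0 !add0r.
have vx := v_mon H 3 A0 x0.
have hb : vge v (u * D / e) (0 + v D + - s).
  apply: (vge_mul H); first exact: (vge_mul H uO (vge_self v D)).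
  by right; rewrite (v_inv H) // ve.
have hbx := vge_mul H hb (vge_self v x).
have [lt|ge] := ltP (v x) s.
  rewrite -addrA; apply: (dom_neq0 H (A3 x x0)).
  apply: (vge_add H); first by apply: (vge_le hbx); rewrite vx; lia.
  by right; rewrite vx; lia.
have [eq|gt] := eqVneq (v x) s.
  set y := x / e.
  have y0 : y != 0 by rewrite /y mulf_neq0 ?invr_eq0.
  have vy : v y = 0 by rewrite /y (val_mul H x0) ?invr_eq0 // (v_inv H) // ve eq; lia.
  have -> : A * x ^+ 3 + u * D / e * x + D = D * (w * y ^+ 3 + u * y + 1).
    by rewrite /w /y; field; rewrite e0 D0.
  rewrite mulf_eq0 (negPf D0) /=; apply/negP => /eqP E.
  by apply: (hu y y0 vy); rewrite E; left.
have gt' : s < v x by rewrite lt_neqAle eq_sym gt ge.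
rewrite addrC; apply: (dom_neq0 H D0).
apply: (vge_add H); first by right; rewrite vx; lia.
by apply: (vge_le hbx); lia.
Qed.

Definition cubic (K : fieldType) (a0 a1 a2 a3 x : K) := a0 + a1 * x + a2 * x ^+ 2 + a3 * x ^+ 3.

Lemma vge_coef (K : fieldType) (v : K -> int) (a : K) : vge v a (- `|v a|).
Proof. have [->|a0] := eqVneq a 0; [left|right] => //; lia. Qed.

Lemma lemC0 (K : fieldType) (v : K -> int) (H : complete_dvf_finite_residue v) (a1 a2 a3 : K) :
  a3 != 0 -> exists a0, a0 != 0 /\ forall x, cubic a0 a1 a2 a3 x != 0.
Proof.
move=> a30.
set N := `|v a1| + `|v a2|.
have h1 : vge v a1 (- N) by apply: (vge_le (vge_coef v a1)); rewrite /N; lia.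
have h2 : vge v a2 (- N) by apply: (vge_le (vge_coef v a2)); rewrite /N; lia.
have N0 : 0 <= N by rewrite /N; lia.
set m := N + `|v a3| + 1.
have [e [e0 ve]] := exists_val H (v a3 + 1 - 3 * m).
exists e; split => // x; rewrite /cubic.
have [->|x0] := eqVneq x 0; first by rewrite !expr0n !mulr0 !addr0.
have vx3 := v_mon H 3 a30 x0.
have hx1 := vge_mul H h1 (vge_self v x).
have hx2 := vge_mul H h2 (vge_self v (x ^+ 2)).
rewrite (v_exp H) // in hx2.
have [le|gt] := leP (v x) (- m).
  rewrite addrC; apply: (dom_neq0 H); first by rewrite mulf_neq0 ?expf_neq0.
  rewrite vx3; apply: (vge_add H); first apply: (vge_add H).
  - by right; rewrite ve; rewrite /m in le *; lia.
  - by apply: (vge_le hx1); rewrite /m in le *; lia.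
  - by apply: (vge_le hx2); rewrite /m in le *; lia.
rewrite -!addrA; apply: (dom_neq0 H e0); rewrite ve.
apply: (vge_add H); last apply: (vge_add H).
- by apply: (vge_le hx1); rewrite /m in gt *; lia.
- by apply: (vge_le hx2); rewrite /m in gt *; lia.
- by right; rewrite vx3; rewrite /m in gt *; lia.
Qed.

Lemma rev_cubic (K : fieldType) (a0 a1 a2 a3 x : K) : x != 0 ->
  cubic a0 a1 a2 a3 x * (x^-1) ^+ 3 = cubic a3 a2 a1 a0 (x^-1).
Proof. by move=> x0; rewrite /cubic; field. Qed.

Lemma rev_root (K : fieldType) (a0 a1 a2 a3 : K) :
  (forall y, cubic a3 a2 a1 a0 y != 0) -> a0 != 0 -> forall x, cubic a0 a1 a2 a3 x != 0.
Proof.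
move=> hy a00 x.
have [->|x0] := eqVneq x 0; first by rewrite /cubic !expr0n !mulr0 !addr0.
apply/negP => /eqP E; move: (hy x^-1); rewrite -rev_cubic // E mul0r eqxx.
by [].
Qed.

Lemma lemC3 (K : fieldType) (v : K -> int) (H : complete_dvf_finite_residue v) (a0 a1 a2 : K) :
  a0 != 0 -> exists a3, a3 != 0 /\ forall x, cubic a0 a1 a2 a3 x != 0.
Proof.
move=> a00; have [c [c0 hc]] := lemC0 H a2 a1 a00.
by exists c; split => //; apply: rev_root.
Qed.

Lemma lemB1 (K : fieldType) (v : K -> int) (H : complete_dvf_finite_residue v) (a0 a3 : K) :
  a0 != 0 -> a3 != 0 -> exists a1, forall x, cubic a0 a1 0 a3 x != 0.
Proof.
move=> a00 a30; have [b hb] := lemB H a30 a00.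
exists b => x; move: (hb x); rewrite /cubic mul0r addr0.
by have -> : a0 + b * x + a3 * x ^+ 3 = a3 * x ^+ 3 + b * x + a0 by ring.
Qed.

Lemma lemB2 (K : fieldType) (v : K -> int) (H : complete_dvf_finite_residue v) (a0 a3 : K) :
  a0 != 0 -> a3 != 0 -> exists a2, forall x, cubic a0 0 a2 a3 x != 0.
Proof.
move=> a00 a30; have [b hb] := lemB H a00 a30.
exists b; apply: rev_root => // y; move: (hb y); rewrite /cubic mul0r addr0.
by have -> : a3 + b * y + a0 * y ^+ 3 = a0 * y ^+ 3 + b * y + a3 by ring.
Qed.

Definition o0 : 'I_4 := @Ordinal 4 0 isT.
Definition o1 : 'I_4 := @Ordinal 4 1 isT.
Definition o2 : 'I_4 := @Ordinal 4 2 isT.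
Definition o3 : 'I_4 := @Ordinal 4 3 isT.

Lemma ord4_cases (i : 'I_4) : i = o0 \/ i = o1 \/ i = o2 \/ i = o3.
Proof.
case: i => [[|[|[|[|//]]]] p]; 
  [left|right;left|right;right;left|right;right;right]; exact: val_inj.
Qed.

Lemma root_poly_of (K : fieldType) (s : position K 3) x :
  root (poly_of s) x =
  (cubic (odflt 0 (s o0)) (odflt 0 (s o1)) (odflt 0 (s o2)) (odflt 0 (s o3)) x == 0).
Proof.
rewrite /root /poly_of horner_poly !big_ord_recl big_ord0 addr0 /cubic.
have -> : (inord (@ord0 3) : 'I_4) = o0 by apply: val_inj; rewrite /= inordK.
have -> : (inord (lift ord0 (@ord0 2)) : 'I_4) = o1 by apply: val_inj; rewrite /= inordK.
have -> : (inord (lift ord0 (lift ord0 (@ord0 1))) : 'I_4) = o2 by apply: val_inj; rewrite /= inordK.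
have -> : (inord (lift ord0 (lift ord0 (lift ord0 (@ord0 0)))) : 'I_4) = o3 by apply: val_inj; rewrite /= inordK.
by rewrite /= expr0 mulr1 expr1 !addrA.
Qed.

Ltac pos := rewrite /set_coef /empty_position ?ffunE /=.

Lemma test (K : fieldType) (c1 c2 : K) :
  set_coef (set_coef (empty_position K 3) o0 c1) o2 c2 o2 = Some c2 /\
  set_coef (set_coef (empty_position K 3) o0 c1) o2 c2 o1 = None.
Proof. pos. split. done. done. Qed.


Lemma WL0 (K : fieldType) (v : K -> int) (H : complete_dvf_finite_residue v) (a1 a2 a3 : K) :
  a3 != 0 -> exists a0, a0 != 0 /\ exists x, cubic a0 a1 a2 a3 x = 0.
Proof.
move=> a30.
set N := `|v a1| + `|v a2|.
have h1 : vge v a1 (- N) by apply: (vge_le (vge_coef v a1)); rewrite /N; lia.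
have h2 : vge v a2 (- N) by apply: (vge_le (vge_coef v a2)); rewrite /N; lia.
set m := N + `|v a3| + 1.
have [x [x0 vx]] := exists_val H (- m).
set g := a1 * x + a2 * x ^+ 2 + a3 * x ^+ 3.
have g0 : g != 0.
  have vx3 := v_mon H 3 a30 x0.
  rewrite /g addrC; apply: (dom_neq0 H); first by rewrite mulf_neq0 ?expf_neq0.
  have hx1 := vge_mul H h1 (vge_self v x).
  have hx2 := vge_mul H h2 (vge_self v (x ^+ 2)).
  rewrite (v_exp H) // in hx2.
  rewrite vx3; apply: (vge_add H).
  - by apply: (vge_le hx1); rewrite vx /m; lia.
  - by apply: (vge_le hx2); rewrite vx /m; lia.
exists (- g); split; first by rewrite oppr_eq0.
by exists x; rewrite /cubic /g; ring.
Qed.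

Lemma WL3 (K : fieldType) (v : K -> int) (H : complete_dvf_finite_residue v) (a0 a1 a2 : K) :
  a0 != 0 -> exists a3, a3 != 0 /\ exists x, cubic a0 a1 a2 a3 x = 0.
Proof.
move=> a00; have [c [c0 [y hy]]] := WL0 H a2 a1 a00.
exists c; split => //.
have y0 : y != 0 by apply/eqP => e; move: hy; rewrite e /cubic !expr0n !mulr0 !addr0 => /eqP; rewrite (negPf c0).
exists y^-1.
have := rev_cubic a0 a1 a2 c (invr_neq0 y0); rewrite invrK hy.
by move/eqP; rewrite mulf_eq0 expf_eq0 /= (negPf y0) orbF => /eqP.
Qed.

Lemma WL1 (K : fieldType) (a0 a2 a3 : K) : exists a1 x, cubic a0 a1 a2 a3 x = 0.
Proof. by exists (- (a0 + a2 + a3)), 1; rewrite /cubic !expr1n; ring. Qed.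

Lemma WL2 (K : fieldType) (a0 a1 a3 : K) : exists a2 x, cubic a0 a1 a2 a3 x = 0.
Proof. by exists (- (a0 + a1 + a3)), 1; rewrite /cubic !expr1n; ring. Qed.

Lemma part1 (K : fieldType) (v : K -> int) (H : complete_dvf_finite_residue v) :
  wanda_has_winning_strategy K 3 false.
Proof.
rewrite /wanda_has_winning_strategy /=.
move=> i1 c1 _; case: (ord4_cases i1) => [->|[->|[->|->]]] l1.
- have c10 : c1 != 0 by apply: l1; left.
  exists o3, 1; split; first by pos. split; first by move=> _; exact: oner_neq0.
  move=> i3 c3; case: (ord4_cases i3) => [->|[->|[->|->]]]; pos; move=> e l3; try (exfalso; discriminate e).
  + have [a [x hx]] := WL2 c1 c3 1.
    exists o2, a; split; first by pos. split; first by case.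
    by exists x; rewrite root_poly_of; pos; apply/eqP.
  + have [a [x hx]] := WL1 c1 c3 1.
    exists o1, a; split; first by pos. split; first by case.
    by exists x; rewrite root_poly_of; pos; apply/eqP.
- exists o2, 0; split; first by pos. split; first by case.
  move=> i3 c3; case: (ord4_cases i3) => [->|[->|[->|->]]]; pos; move=> e l3; try (exfalso; discriminate e).
  + have c30 : c3 != 0 by apply: l3; left.
    have [a [a0 [x hx]]] := WL3 H c1 0 c30.
    exists o3, a; split; first by pos. split; first by move=> _.
    by exists x; rewrite root_poly_of; pos; apply/eqP.
  + have c30 : c3 != 0 by apply: l3; right.
    have [a [a0 [x hx]]] := WL0 H c1 0 c30.
    exists o0, a; split; first by pos. split; first by move=> _.
    by exists x; rewrite root_poly_of; pos; apply/eqP.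
- exists o1, 0; split; first by pos. split; first by case.
  move=> i3 c3; case: (ord4_cases i3) => [->|[->|[->|->]]]; pos; move=> e l3; try (exfalso; discriminate e).
  + have c30 : c3 != 0 by apply: l3; left.
    have [a [a0 [x hx]]] := WL3 H 0 c1 c30.
    exists o3, a; split; first by pos. split; first by move=> _.
    by exists x; rewrite root_poly_of; pos; apply/eqP.
  + have c30 : c3 != 0 by apply: l3; right.
    have [a [a0 [x hx]]] := WL0 H 0 c1 c30.
    exists o0, a; split; first by pos. split; first by move=> _.
    by exists x; rewrite root_poly_of; pos; apply/eqP.
- have c10 : c1 != 0 by apply: l1; right.
  exists o0, 1; split; first by pos. split; first by move=> _; exact: oner_neq0.
  move=> i3 c3; case: (ord4_cases i3) => [->|[->|[->|->]]]; pos; move=> e l3; try (exfalso; discriminate e).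
  + have [a [x hx]] := WL2 1 c3 c1.
    exists o2, a; split; first by pos. split; first by case.
    by exists x; rewrite root_poly_of; pos; apply/eqP.
  + have [a [x hx]] := WL1 1 c3 c1.
    exists o1, a; split; first by pos. split; first by case.
    by exists x; rewrite root_poly_of; pos; apply/eqP.
Qed.


Lemma part2 (K : fieldType) (v : K -> int) (H : complete_dvf_finite_residue v) :
  nora_has_winning_strategy K 3 true.
Proof.
rewrite /nora_has_winning_strategy /=.
move=> i1 c1 _; case: (ord4_cases i1) => [->|[->|[->|->]]] l1.
- have c10 : c1 != 0 by apply: l1; left.
  exists o2, 0; split; first by pos. split; first by case.
  move=> i3 c3; case: (ord4_cases i3) => [->|[->|[->|->]]]; pos; move=> e l3; try (exfalso; discriminate e).
  + have [a [a0 h]] := lemC3 H c3 0 c10.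
    exists o3, a; split; first by pos. split; first by move=> _.
    by case=> x; rewrite root_poly_of; pos; apply/negP; apply: h.
  + have c30 : c3 != 0 by apply: l3; right.
    have [a h] := lemB1 H c10 c30.
    exists o1, a; split; first by pos. split; first by case.
    by case=> x; rewrite root_poly_of; pos; apply/negP; apply: h.
- exists o2, 0; split; first by pos. split; first by case.
  move=> i3 c3; case: (ord4_cases i3) => [->|[->|[->|->]]]; pos; move=> e l3; try (exfalso; discriminate e).
  + have c30 : c3 != 0 by apply: l3; left.
    have [a [a0 h]] := lemC3 H c1 0 c30.
    exists o3, a; split; first by pos. split; first by move=> _.
    by case=> x; rewrite root_poly_of; pos; apply/negP; apply: h.
  + have c30 : c3 != 0 by apply: l3; right.
    have [a [a0 h]] := lemC0 H c1 0 c30.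
    exists o0, a; split; first by pos. split; first by move=> _.
    by case=> x; rewrite root_poly_of; pos; apply/negP; apply: h.
- exists o1, 0; split; first by pos. split; first by case.
  move=> i3 c3; case: (ord4_cases i3) => [->|[->|[->|->]]]; pos; move=> e l3; try (exfalso; discriminate e).
  + have c30 : c3 != 0 by apply: l3; left.
    have [a [a0 h]] := lemC3 H 0 c1 c30.
    exists o3, a; split; first by pos. split; first by move=> _.
    by case=> x; rewrite root_poly_of; pos; apply/negP; apply: h.
  + have c30 : c3 != 0 by apply: l3; right.
    have [a [a0 h]] := lemC0 H 0 c1 c30.
    exists o0, a; split; first by pos. split; first by move=> _.
    by case=> x; rewrite root_poly_of; pos; apply/negP; apply: h.
- have c10 : c1 != 0 by apply: l1; right.
  exists o1, 0; split; first by pos. split; first by case.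
  move=> i3 c3; case: (ord4_cases i3) => [->|[->|[->|->]]]; pos; move=> e l3; try (exfalso; discriminate e).
  + have c30 : c3 != 0 by apply: l3; left.
    have [a h] := lemB2 H c30 c10.
    exists o2, a; split; first by pos. split; first by case.
    by case=> x; rewrite root_poly_of; pos; apply/negP; apply: h.
  + have [a [a0 h]] := lemC0 H 0 c3 c10.
    exists o0, a; split; first by pos. split; first by move=> _.
    by case=> x; rewrite root_poly_of; pos; apply/negP; apply: h.
Qed.

Close Scope ring_scope.
Unset Implicit Arguments.

Theorem proposition2 (K : fieldType) (v : K -> int) :
  complete_dvf_finite_residue v ->
  wanda_has_winning_strategy K 3 false /\ nora_has_winning_strategy K 3 true.
Proof.
move=> H; split; [exact: (part1 H) | exact: (part2 H)].
Qed.
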